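(* Let $n\ge 1$, let $\rho\in(0,1)$, $\alpha\ge 0$, and let $F:\mathbb{R}^n\to\mathbb{R}^n$ be $\rho$-Lipschitz (Euclidean norm). Assume there exist a symmetric positive semidefinite matrix $G\in\mathbb{R}^{n\times n}$ with $G\preccurlyeq \rho I$ and an $\alpha$-Lipschitz map $\xi:\mathbb{R}^n\to\mathbb{R}^n$ such that $F(x)=Gx+\xi(x)$ for all $x$. Let $C\ge 1$, let $k\ge 1$ be an integer, let $x_0\in\mathbb{R}^n$, and let $x_e$ be the output of the Constrained Anderson Acceleration procedure (described in the context) started at $x_0$ with parameters $C$ and $k$. Then $$\|F(x_e)-x_e\|\le\Big(\max_{x\in[0,\rho]}|p_*(x)|+3C\alpha k\Big)\|F(x_0)-x_0\|,$$ where $p_*$ is any minimizer of $\max_{x\in[0,\rho]}|p(x)|$ over all $p\in\mathbb{R}_k[X]$ with $p(1)=1$ and $\|p\|_1\le C$.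
   Context: $\|\cdot\|$ denotes the Euclidean norm on $\mathbb{R}^n$. $\mathbb{R}_k[X]$ is the space of real polynomials of degree at most $k$, and for $p=\sum_{i=0}^k p_iX^i$, $\|p\|_1=\sum_{i=0}^k|p_i|$ (the $\ell_1$ norm of the coefficient vector); for a vector $c$, $\|c\|_1=\sum_i|c_i|$. Constrained Anderson Acceleration (CAA) with input $x_0$, constraint bound $C$ and integer $k$: set $x_{i+1}=F(x_i)$ for $i=0,\dots,k$; form the matrix $R=[x_0-x_1,\ x_1-x_2,\ \dots,\ x_k-x_{k+1}]\in\mathbb{R}^{n\times(k+1)}$; compute $\tilde c\in\arg\min\{\|Rc\| : c\in\mathbb{R}^{k+1},\ \mathbf{1}^Tc=1,\ \|c\|_1\le C\}$; output $x_e=\sum_{i=0}^k\tilde c_i x_i$. *)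

(* Defs.v *)
From HB Require Import structures.
From mathcomp Require Import all_boot all_order all_algebra.
From mathcomp Require Import classical_sets reals.
Set Implicit Arguments. Unset Strict Implicit. Unset Printing Implicit Defensive.
Import Order.TTheory GRing.Theory Num.Theory.
Local Open Scope ring_scope.
Local Open Scope classical_set_scope.

Section Defs.
Variable R : realType.

Definition enorm (n : nat) (v : 'cV[R]_n) : R := Num.sqrt (\sum_i (v i 0) ^+ 2).

Definition l1vec (m : nat) (c : 'cV[R]_m) : R := \sum_i `|c i 0|.

Definition l1poly (p : {poly R}) : R := \sum_(i < size p) `|p`_i|.

Definition lipschitz (n : nat) (L : R) (f : 'cV[R]_n -> 'cV[R]_n) : Prop :=
  forall x y, enorm (f x - f y) <= L * enorm (x - y).

Definition caa_matrix (n : nat) (F : 'cV[R]_n -> 'cV[R]_n) (x0 : 'cV[R]_n) (k : nat)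
  : 'M[R]_(n, k.+1) :=
  \matrix_(r < n, j < k.+1) ((iter j F x0) r 0 - (iter j.+1 F x0) r 0).

Definition caa_feasible (k : nat) (C : R) (c : 'cV[R]_k.+1) : Prop :=
  \sum_i c i 0 = 1 /\ l1vec c <= C.

Definition caa_coeff (n : nat) (F : 'cV[R]_n -> 'cV[R]_n) (x0 : 'cV[R]_n)
  (C : R) (k : nat) (c : 'cV[R]_k.+1) : Prop :=
  caa_feasible C c /\
  forall c' : 'cV[R]_k.+1, caa_feasible C c' ->
    enorm (caa_matrix F x0 k *m c) <= enorm (caa_matrix F x0 k *m c').

Definition caa_output (n : nat) (F : 'cV[R]_n -> 'cV[R]_n) (x0 : 'cV[R]_n)
  (k : nat) (c : 'cV[R]_k.+1) : 'cV[R]_n :=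
  \sum_(i < k.+1) c i 0 *: iter i F x0.

(* max_{x in [0, rho]} |p(x)| (a max since [0,rho] is compact and p continuous). *)
Definition maxabs (rho : R) (p : {poly R}) : R :=
  sup [set `|p.[x]| | x in [set x : R | 0 <= x <= rho]].

Definition poly_admissible (k : nat) (C : R) (p : {poly R}) : Prop :=
  (size p <= k.+1)%N /\ p.[1] = 1 /\ l1poly p <= C.

Definition poly_minimizer (k : nat) (C rho : R) (p : {poly R}) : Prop :=
  poly_admissible k C p /\
  forall q, poly_admissible k C q -> maxabs rho p <= maxabs rho q.

End Defs.

(* Main.v *)
Require Import Defs.
From HB Require Import structures.
From mathcomp Require Import all_boot all_order all_algebra.
From mathcomp Require Import classical_sets reals.
From mathcomp Require Import ring lra.
From mathcomp Require Import complex.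
Import Order.TTheory GRing.Theory Num.Theory.
Set Implicit Arguments. Unset Strict Implicit. Unset Printing Implicit Defensive.
Local Open Scope ring_scope.
Section Enorm.
Variable R : realType.
Variable m : nat.
Implicit Types u v w : 'cV[R]_m.

Definition dotv u v : R := \sum_i u i 0 * v i 0.

Lemma dotvC u v : dotv u v = dotv v u.
Proof. by apply: eq_bigr => i _; rewrite mulrC. Qed.

Lemma dotv_ge0 v : 0 <= dotv v v.
Proof. by apply: sumr_ge0 => i _; rewrite -expr2 sqr_ge0. Qed.

Lemma enormE v : enorm v = Num.sqrt (dotv v v).
Proof. by rewrite /enorm /dotv; congr Num.sqrt; apply: eq_bigr => i _; rewrite expr2. Qed.

Lemma enorm_ge0 v : 0 <= enorm v.
Proof. exact: sqrtr_ge0. Qed.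

Lemma enorm_sq v : enorm v ^+ 2 = dotv v v.
Proof. by rewrite enormE sqr_sqrtr // dotv_ge0. Qed.

Lemma dotvDl u v w : dotv (u + v) w = dotv u w + dotv v w.
Proof. by rewrite /dotv -big_split; apply: eq_bigr => i _; rewrite !mxE mulrDl. Qed.

Lemma dotvZl a u w : dotv (a *: u) w = a * dotv u w.
Proof. by rewrite /dotv mulr_sumr; apply: eq_bigr => i _; rewrite !mxE mulrA. Qed.

Lemma dotvDr u v w : dotv w (u + v) = dotv w u + dotv w v.
Proof. by rewrite dotvC dotvDl !(dotvC w). Qed.

Lemma dotvZr a u w : dotv w (a *: u) = a * dotv w u.
Proof. by rewrite dotvC dotvZl dotvC. Qed.

Lemma dotvNl u w : dotv (- u) w = - dotv u w.
Proof. by rewrite -scaleN1r dotvZl mulN1r. Qed.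

Lemma dotvNr u w : dotv w (- u) = - dotv w u.
Proof. by rewrite dotvC dotvNl dotvC. Qed.

Lemma dotv0 v : dotv v v = 0 -> v = 0.
Proof.
move=> /eqP; rewrite psumr_eq0 => [/allP H|i _]; last by rewrite -expr2 sqr_ge0.
apply/matrixP => i j; rewrite ord1 mxE.
by have /(_ (mem_index_enum i)) := H i; rewrite /= mulf_eq0 orbb => /eqP.
Qed.

Lemma CS u v : dotv u v ^+ 2 <= dotv u u * dotv v v.
Proof.
have [/dotv0 ->|vv0] := eqVneq (dotv v v) 0.
  rewrite {1}/dotv big1 => [|i _]; last by rewrite mxE mulr0.
  by rewrite expr0n /= mulr_ge0 ?dotv_ge0.
have vvp : 0 < dotv v v by rewrite lt_def vv0 dotv_ge0.
have := dotv_ge0 (dotv v v *: u - dotv u v *: v).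
rewrite !(dotvDl, dotvDr, dotvZl, dotvZr, dotvNl, dotvNr) (dotvC v u).
set a := dotv u u; set b := dotv u v; set c := dotv v v => H.
have : 0 <= c * (a * c - b ^+ 2) by rewrite -(@ler_pM2l _ 1) ?ltr01 //; nra.
by rewrite pmulr_rge0 // subr_ge0.
Qed.

Lemma dotv_le u v : dotv u v <= enorm u * enorm v.
Proof.
apply: le_trans (ler_norm _) _; rewrite -sqrtr_sqr !enormE -sqrtrM ?dotv_ge0 //.
by rewrite ler_wsqrtr // CS.
Qed.

Lemma enormD u v : enorm (u + v) <= enorm u + enorm v.
Proof.
rewrite -[_ <= _](@ler_pXn2r _ 2) ?nnegrE ?addr_ge0 ?enorm_ge0 //.
rewrite enorm_sq !(dotvDl, dotvDr) sqrrD !enorm_sq (dotvC v u).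
have := dotv_le u v; lra.
Qed.

Lemma enormZ a v : enorm (a *: v) = `|a| * enorm v.
Proof.
rewrite !enormE !(dotvZl, dotvZr) mulrA -expr2 sqrtrM ?sqr_ge0 //.
by rewrite sqrtr_sqr.
Qed.

Lemma enormN v : enorm (- v) = enorm v.
Proof. by rewrite -scaleN1r enormZ normrN normr1 mul1r. Qed.

Lemma enormB u v : enorm (u - v) = enorm (v - u).
Proof. by rewrite -enormN opprB. Qed.

Lemma enorm_sum (I : Type) (r : seq I) (P : pred I) (f : I -> 'cV[R]_m) :
  enorm (\sum_(i <- r | P i) f i) <= \sum_(i <- r | P i) enorm (f i).
Proof.
elim/big_rec2: _ => [|i y1 y2 _ H]; first by rewrite enormE /dotv big1 ?sqrtr0 // => i _; rewrite mxE mul0r.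
by apply: le_trans (enormD _ _) _; rewrite lerD2l.
Qed.

End Enorm.

Section T.
Import Num.Def.
Local Open Scope sesquilinear_scope.
Variable R : realType.
Local Notation C := (R[i]).
Local Notation phi := (real_complex R).
Local Open Scope sesquilinear_scope.

Lemma phiR (x : R) : phi x \is Num.real. Proof. apply/complex_realP; by exists x. Qed.
Lemma conj_phi (x : R) : (phi x)^* = phi x. Proof. exact/conj_Creal/phiR. Qed.

Lemma map_conj_phi m n (M : 'M[R]_(m, n)) : map_mx conjC (map_mx phi M) = map_mx phi M.
Proof. by apply/matrixP => i j; rewrite !mxE conj_phi. Qed.

Lemma decompC m n (z : 'M[C]_(m, n)) :
  z = map_mx phi (map_mx (@complex.Re R) z) + 'i *: map_mx phi (map_mx (@complex.Im R) z).
Proof. by apply/matrixP => i j; rewrite !mxE [LHS]complexE. Qed.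

Lemma tr11 (R' : Type) (M : 'M[R']_1) : M^T = M.
Proof. by apply/matrixP => i j; rewrite !ord1 mxE. Qed.

Lemma quadC m (G : 'M[R]_m) (z : 'cV[C]_m) : G^T = G ->
  let a := map_mx (@complex.Re R) z in let b := map_mx (@complex.Im R) z in
  (z^t* *m map_mx phi G *m z) 0 0 =
  phi ((a^T *m G *m a) 0 0 + (b^T *m G *m b) 0 0).
Proof.
move=> Gs a b.
rewrite [in LHS](decompC z) -/a -/b.
set A := map_mx phi a; set B := map_mx phi b; set G' := map_mx phi G.
have -> : (A + 'i *: B)^t* = A^T - 'i *: B^T.
  apply/matrixP => i j; rewrite !mxE rmorphD rmorphM /= !conj_phi conjCi.
  by rewrite mulNr.
rewrite !mulmxDl !mulmxDr !mulNmx.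
have cross : (A^T *m G' *m B) = (B^T *m G' *m A).
  have GT : G'^T = G' by rewrite /G' map_trmx Gs.
  by rewrite -[LHS]tr11 !trmx_mul trmxK GT mulmxA.
rewrite -!scalemxAl -!scalemxAr scalerA cross -expr2 sqrCi scaleN1r opprK addrA addrK.
suff -> : A^T *m G' *m A + B^T *m G' *m B = map_mx phi (a^T *m G *m a + b^T *m G *m b).
  by rewrite !mxE.
by rewrite map_mxD !map_mxM !map_trmx.
Qed.


Lemma tcM m n p (X : 'M[C]_(m, n)) (Y : 'M[C]_(n, p)) : (X *m Y)^t* = Y^t* *m X^t*.
Proof. by rewrite trmx_mul map_mxM. Qed.

Lemma phiM m (X : 'cV[R]_m) :
  (map_mx phi X)^t* *m map_mx phi X = map_mx phi (X^T *m X).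
Proof. by rewrite map_mxM map_trmx map_conj_phi. Qed.

Lemma key n (G : 'M[R]_n.+1) (rho M : R) (p : {poly R}) (v : 'cV[R]_n.+1) :
  G^T = G ->
  (forall v : 'cV[R]_n.+1, 0 <= (v^T *m G *m v) 0 0) ->
  (forall v : 'cV[R]_n.+1, (v^T *m G *m v) 0 0 <= rho * (v^T *m v) 0 0) ->
  (forall x, 0 <= x <= rho -> `|p.[x]| <= M) ->
  ((horner_mx G p *m v)^T *m (horner_mx G p *m v)) 0 0 <= M ^+ 2 * (v^T *m v) 0 0.
Proof.
move=> Gs Gpsd Gle pM; set w := horner_mx G p *m v.
pose A := map_mx phi G.
have Aherm : A \is hermsymmx.
  apply: realsym_hermsym.
    apply/is_hermitianmxP; rewrite expr0 scale1r.
    apply/matrixP => i j; rewrite !mxE /=.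
    by have /matrixP/(_ j i) := Gs; rewrite mxE => ->.
  by apply/mxOverP => i j; rewrite mxE phiR.
have /orthomx_spectralP hA := hermitian_normalmx Aherm.
set P := spectralmx A in hA; set D := spectral_diag A in hA.
have Pu : P \is unitarymx := spectral_unitarymx A.
have PU : P \in unitmx := spectral_unit A.
have iP : invmx P = P^t* := invmx_unitary Pu.
have PPt : P *m P^t* = 1%:M by apply/unitarymxP.
have PtP : P^t* *m P = 1%:M by rewrite -iP mulVmx.
have Dbound : forall j, exists t, D 0 j = phi t /\ 0 <= t <= rho.
  move=> j.
  pose z : 'cV[C]_n.+1 := P^t* *m delta_mx j 0.
  have zt : z^t* = delta_mx 0 j *m P.
    by rewrite /z tcM trmxCK trmx_delta map_delta_mx.
  have E1 : (z^t* *m A *m z) 0 0 = D 0 j.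
    rewrite zt /z [in LHS]hA iP !mulmxA -(mulmxA _ P (P^t* )) PPt mulmx1.
    rewrite -(mulmxA _ P (P^t* )) PPt mulmx1 -rowE -colE !mxE eqxx.
    by rewrite mulr1n.
  have E2 : (z^t* *m z) 0 0 = 1.
    by rewrite zt /z !mulmxA -(mulmxA _ P (P^t* )) PPt mulmx1 mul_delta_mx mxE !eqxx.
  move: E1 E2; rewrite quadC // -{1}[z^t*]mulmx1 -(map_mx1 phi) quadC ?trmx1 //.
  rewrite !mulmx1 -(rmorph1 phi) => E1 /complexI E2.
  exists (((map_mx (@complex.Re R) z)^T *m G *m map_mx (@complex.Re R) z) 0 0
       + ((map_mx (@complex.Im R) z)^T *m G *m map_mx (@complex.Im R) z) 0 0).
  split; first by [].
  rewrite addr_ge0 ?Gpsd //=.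
  apply: le_trans (lerD (Gle _) (Gle _)) _.
  by rewrite -mulrDr E2 mulr1.
have cnorm : forall X : 'cV[C]_n.+1, (X^t* *m X) 0 0 = \sum_j (X j 0)^* * X j 0.
  by move=> X; rewrite mxE; apply: eq_bigr => j _; rewrite !mxE.
rewrite -lecR.
have -> : phi ((w^T *m w) 0 0) = ((map_mx phi w)^t* *m map_mx phi w) 0 0.
  by rewrite phiM [RHS]mxE.
have -> : phi (M ^+ 2 * (v^T *m v) 0 0) =
    phi (M ^+ 2) * ((map_mx phi v)^t* *m map_mx phi v) 0 0.
  by rewrite phiM [X in _ = _ * X]mxE rmorphM.
set y := P *m map_mx phi v.
have -> : (map_mx phi v)^t* *m map_mx phi v = y^t* *m y.
  by rewrite /y tcM !mulmxA -(mulmxA _ (P^t* ) P) PtP mulmx1.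
set E := map_mx (horner (map_poly phi p)) D.
have -> : map_mx phi w = P^t* *m (diag_mx E *m y).
  rewrite /w map_mxM map_horner_mx -/A hA horner_mx_uconjC // horner_mx_diag.
  by rewrite iP !mulmxA.
rewrite tcM trmxCK mulmxA -(mulmxA _ P (P^t* )) PPt mulmx1.
rewrite !cnorm mulr_sumr; apply: ler_sum => j _.
have [t [Dj /pM tb]] := Dbound j.
have E_j : E 0 j = phi (p.[t]) by rewrite /E mxE Dj horner_map.
rewrite mul_diag_mx mxE E_j rmorphM /= conj_phi.
have -> : phi p.[t] * (y j 0)^* * (phi p.[t] * y j 0) = phi (p.[t] ^+ 2) * ((y j 0)^* * y j 0).
  by rewrite rmorphXn /= expr2; ring.
apply: ler_wpM2r; first by rewrite mulrC mul_conjC_ge0.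
rewrite lecR -(real_normK (num_real p.[t])) ler_pXn2r ?nnegrE //.
exact: le_trans (normr_ge0 _) tb.
Qed.

End T.

Lemma grp1 (V : zmodType) (a b c d e : V) : a + b - (c + d) - e = (a - c - e) + (b - d).
Proof. by rewrite opprD !addrA (addrAC (a - c) (-e) b) (addrAC a (-c) b) (addrAC (a + b - c) (-e) (-d)). Qed.

Lemma grp2 (V : zmodType) (a b t w : V) : a + b - (a + t) = b - w - (t - w).
Proof. by rewrite opprD addrACA subrr add0r opprB addrA subrK. Qed.
Lemma dotvE (R : realType) m (u : 'cV[R]_m) : dotv u u = (u^T *m u) 0 0.
Proof. by rewrite mxE; apply: eq_bigr => j _; rewrite mxE. Qed.

Lemma key_enorm (R : realType) n (G : 'M[R]_n.+1) (rho M : R) (p : {poly R}) (v : 'cV[R]_n.+1) :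
  G^T = G ->
  (forall v : 'cV[R]_n.+1, 0 <= (v^T *m G *m v) 0 0) ->
  (forall v : 'cV[R]_n.+1, (v^T *m G *m v) 0 0 <= rho * (v^T *m v) 0 0) ->
  0 <= rho ->
  (forall x, 0 <= x <= rho -> `|p.[x]| <= M) ->
  enorm (horner_mx G p *m v) <= M * enorm v.
Proof.
move=> Gs Gpsd Gle rho0 pM.
have M0 : 0 <= M by apply: le_trans (pM 0 _); rewrite ?normr_ge0 // lexx rho0.
rewrite -[_ <= _](@ler_pXn2r _ 2) ?nnegrE ?mulr_ge0 ?enorm_ge0 //.
by rewrite exprMn !enorm_sq !dotvE (@key _ _ G rho M p v Gs Gpsd Gle pM).
Qed.

Lemma sum_bound (R : realType) m k (a : 'I_k.+1 -> R) (f : 'I_k.+1 -> 'cV[R]_m) (B : R) :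
  0 <= B -> (forall j : 'I_k.+1, enorm (f j) <= j%:R * B) ->
  enorm (\sum_j a j *: f j) <= (\sum_j `|a j|) * (k%:R * B).
Proof.
move=> B0 hf; apply: le_trans (enorm_sum _ _ _) _; rewrite mulr_suml.
apply: ler_sum => j _; rewrite enormZ ler_wpM2l ?normr_ge0 //.
apply: le_trans (hf j) _; by rewrite ler_wpM2r // ler_nat -ltnS ltn_ord.
Qed.

Lemma sum_aff (R : realType) m k (a : 'I_k.+1 -> R) (f : 'I_k.+1 -> 'cV[R]_m) (w : 'cV[R]_m) :
  \sum_j a j = 1 -> \sum_j a j *: (f j - w) = \sum_j a j *: f j - w.
Proof.
move=> s1; under eq_bigr do rewrite scalerBr.
by rewrite sumrB -scaler_suml s1 scale1r.
Qed.

Theorem proposition2 (R : realType) (n : nat) (hn : (1 <= n)%N)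
  (rho alpha : R) (hrho0 : 0 < rho) (hrho1 : rho < 1) (halpha : 0 <= alpha)
  (F : 'cV[R]_n -> 'cV[R]_n) (hF : lipschitz rho F)
  (G : 'M[R]_n) (xi : 'cV[R]_n -> 'cV[R]_n)
  (hGsym : G^T = G)
  (hGpsd : forall v : 'cV[R]_n, 0 <= (v^T *m G *m v) 0 0)
  (hGle : forall v : 'cV[R]_n, (v^T *m G *m v) 0 0 <= rho * (v^T *m v) 0 0)
  (hxi : lipschitz alpha xi)
  (hFdec : forall x, F x = G *m x + xi x)
  (C : R) (hC : 1 <= C) (k : nat) (hk : (1 <= k)%N) (x0 : 'cV[R]_n)
  (c : 'cV[R]_k.+1) (hc : caa_coeff F x0 C c)
  (pstar : {poly R}) (hp : poly_minimizer k C rho pstar) :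
  let xe := caa_output F x0 c in
  enorm (F xe - xe) <=
    (maxabs rho pstar + 3%:R * C * alpha * k%:R) * enorm (F x0 - x0).
Proof.
cbv zeta; set xe := caa_output F x0 c.
destruct n as [|n]; first by [].
pose x i := iter i F x0.
have xS i : x i.+1 = F (x i) by [].
pose r i := x i - x i.+1.
pose N := enorm (r 0%N).
have hN : enorm (F x0 - x0) = N by rewrite /N /r enormB.
have N0 : 0 <= N := enorm_ge0 _.
have hr : forall i, enorm (r i) <= N.
  elim => [|i IH] //; apply: le_trans IH.
  rewrite /r !xS; apply: le_trans (hF _ _) _.
  by rewrite ler_piMl ?enorm_ge0 // ltW.
have hx : forall i, enorm (x i - x 0%N) <= i%:R * N.
  elim => [|i IH]; first by rewrite subrr -(scale0r 0) enormZ normr0 !mul0r.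
  have -> : x i.+1 - x 0%N = (x i - x 0%N) + (x i.+1 - x i) by rewrite [RHS]addrC addrA subrK.
  apply: le_trans (enormD _ _) _; rewrite (enormB (x i.+1)) -natr1 mulrDl mul1r.
  exact: lerD IH (hr i).
have Gc : forall w, enorm (G *m w) <= enorm w.
  move=> w; rewrite -[G in G *m w]horner_mx_X -[enorm w]mul1r.
  apply: (key_enorm _ hGsym hGpsd hGle (ltW hrho0)) => y /andP[y0 y1].
  by rewrite hornerX ger0_norm // (le_trans y1) // ltW.
have he : forall i, enorm (r i - G ^+ i *m r 0%N) <= i%:R * alpha * N.
  elim => [|i IH]; first by rewrite expr0 mul1mx subrr -(scale0r 0) enormZ normr0 !mul0r.
  have -> : r i.+1 - G ^+ i.+1 *m r 0%N = G *m (r i - G ^+ i *m r 0%N) + (xi (x i) - xi (x i.+1)).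
    have -> : r i.+1 = F (x i) - F (x i.+1) by [].
    have ri : r i = x i - x i.+1 by [].
    rewrite exprS -mulmxA ri; move: (G ^+ i *m r 0%N) => g.
    rewrite !hFdec mulmxBr mulmxBr grp1; reflexivity.
  apply: le_trans (enormD _ _) _.
  rewrite -natr1 !mulrDl !mul1r.
  apply: lerD; first exact: le_trans (Gc _) IH.
  by apply: le_trans (hxi _ _) _; rewrite ler_wpM2l //; exact: hr.
case: hc => [[sc1 cl1] cmin].
case: hp => [[psz [p1 pl1]] _].
pose c' := \col_(j < k.+1) pstar`_j.
have l1c' : l1vec c' = l1poly pstar.
  rewrite /l1vec /l1poly (big_ord_widen _ (fun i => `|pstar`_i|) psz) [RHS]big_mkcond.
  apply: eq_bigr => j _; rewrite mxE; case: ifP => // /negbT; rewrite -leqNgt => h.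
  by rewrite nth_default // normr0.
have c'f : caa_feasible C c'.
  split; last by rewrite l1c'.
  rewrite -p1 (horner_coef_wide _ psz); apply: eq_bigr => j _.
  by rewrite mxE expr1n mulr1.
have Rc_def : forall d, caa_matrix F x0 k *m d = \sum_j d j 0 *: r j.
  move=> d; apply/matrixP => a b; rewrite ord1 !mxE summxE; apply: eq_bigr => j _.
  by rewrite !mxE mulrC.
have hpoly : forall y, 0 <= y <= rho -> `|pstar.[y]| <= maxabs rho pstar.
  move=> y hy.
  have hub : has_ubound [set `|pstar.[z]| | z in [set z : R | 0 <= z <= rho]].
    exists C => _ [z /andP[z0 z1] <-]; apply: le_trans pl1.
    rewrite horner_coef; apply: le_trans (ler_norm_sum _ _ _) _.
    apply: ler_sum => i _; rewrite normrM normrX ler_piMr ?normr_ge0 //.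
    by rewrite exprn_ile1 ?normr_ge0 // ger0_norm // (le_trans z1) // ltW.
  by apply: (ub_le_sup hub); exists y.
have hRc' : enorm (caa_matrix F x0 k *m c') <= maxabs rho pstar * N + C * (k%:R * (alpha * N)).
  rewrite Rc_def.
  have -> : \sum_j c' j 0 *: r j = horner_mx G pstar *m r 0%N + \sum_j c' j 0 *: (r j - G ^+ j *m r 0%N).
    have hm : horner_mx G pstar = \sum_(j < k.+1) c' j 0 *: G ^+ j.
      rewrite {1}(_ : pstar = \sum_(j < k.+1) pstar`_j *: 'X^j).
        rewrite linear_sum; apply: eq_bigr => j _.
        by rewrite linearZ /= rmorphXn /= horner_mx_X mxE.
      rewrite -poly_def; apply/polyP => i; rewrite coef_poly; case: ltnP => // h.
      by rewrite nth_default //; exact: leq_trans psz h.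
    rewrite hm mulmx_suml -big_split; apply: eq_bigr => j _ /=.
    by rewrite -scalemxAl -scalerDr addrC subrK.
  apply: le_trans (enormD _ _) _; apply: lerD.
    exact: key_enorm hGsym hGpsd hGle (ltW hrho0) hpoly.
  apply: le_trans (sum_bound (fun j => c' j 0) (B := alpha * N) _ _) _.
  - by rewrite mulr_ge0.
  - by move=> j; rewrite mulrA he.
  by rewrite ler_wpM2r ?mulr_ge0 ?ler0n //; exact: c'f.2.
have hRc := cmin c' c'f.
pose S := \sum_j c j 0 *: F (x j).
have e1 : F xe - xe = (F xe - S) - caa_matrix F x0 k *m c.
  have -> : caa_matrix F x0 k *m c = xe - S.
    by rewrite Rc_def -sumrB; apply: eq_bigr => j _; rewrite scalerBr.
  by rewrite opprB addrA subrK.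
have e2 : F xe - S = (xi xe - xi x0) - \sum_j c j 0 *: (xi (x j) - xi x0).
  rewrite sum_aff //.
  have -> : S = G *m xe + \sum_j c j 0 *: xi (x j).
    rewrite /S /xe /caa_output mulmx_sumr -big_split; apply: eq_bigr => j _.
    by rewrite hFdec scalerDr scalemxAr.
  by rewrite hFdec (grp2 _ _ _ (xi x0)); reflexivity.
have hxe : enorm (xe - x0) <= C * (k%:R * N).
  have -> : xe - x0 = \sum_j c j 0 *: (x j - x 0%N) by rewrite sum_aff.
  apply: le_trans (sum_bound _ N0 (fun j => hx j)) _.
  by rewrite ler_wpM2r // mulr_ge0 // ler0n.
have hT : enorm (\sum_j c j 0 *: (xi (x j) - xi x0)) <= C * (k%:R * (alpha * N)).
  apply: le_trans (sum_bound _ (B := alpha * N) _ _) _.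
  - by rewrite mulr_ge0.
  - move=> j; apply: le_trans (hxi _ _) _.
    by rewrite mulrCA ler_wpM2l // hx.
  by rewrite ler_wpM2r // ?mulr_ge0 // ler0n.
have A1 : enorm (F xe - S) <= alpha * (C * (k%:R * N)) + C * (k%:R * (alpha * N)).
  rewrite e2; apply: le_trans (enormD _ _) _; rewrite enormN; apply: lerD => //.
  by apply: le_trans (hxi _ _) _; rewrite ler_wpM2l.
rewrite hN e1; apply: le_trans (enormD _ _) _; rewrite enormN.
have := le_trans hRc hRc'.
move: A1; set a := maxabs rho pstar; set kk := k%:R.
move=> A1 A2.
have : enorm (F xe - S) + enorm (caa_matrix F x0 k *m c) <=
   alpha * (C * (kk * N)) + C * (kk * (alpha * N)) + (a * N + C * (kk * (alpha * N))).
  exact: lerD.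
move=> H; apply: le_trans H _.
by rewrite le_eqVlt; apply/orP; left; apply/eqP; ring.
Qed.
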